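(* Let $N\ge1$, $\mathbf{M}=\mathrm{diag}(m_0,\dots,m_N)$ arbitrary real diagonal, $\mathbf{m}=(m_0,\dots,m_N)^\top$, and let $\mathbf{Q}_N$ be the tridiagonal matrix with $(\mathbf{Q}_N)_{kk}=-N$, $(\mathbf{Q}_N)_{k+1,k}=N-k$, $(\mathbf{Q}_N)_{k-1,k}=k$ (indices $0,\dots,N$) and zeros elsewhere. Let $\mathbf{C}$ be the $(N+1)\times(N+1)$ matrix with entries $c_{ik}$ defined by $\sum_{i=0}^N c_{ik}t^i=(1-t)^k(1+t)^{N-k}$ (so its columns are eigenvectors of $\mathbf{Q}_N$ and $\mathbf{C}^{-1}=2^{-N}\mathbf{C}$). For $\mu>0$ let $\mathbf{p}(\mu)\in S_{N+1}$ be the positive solution of $(\mathbf{M}+\mu\mathbf{Q}_N)\mathbf{p}=\overline{m}\,\mathbf{p}$ with $\overline{m}=\mathbf{m}\cdot\mathbf{p}$, and put $\mathbf{x}(\mu)=\mathbf{C}^{-1}\mathbf{p}(\mu)$. Let $\hat{\mathbf{x}}=2^{-N}(1,0,\dots,0)^\top$. Then for all $\mu>0$, $$\|\mathbf{x}(\mu)-\hat{\mathbf{x}}\|_1\le\frac{1}{\mu}\|\mathbf{M}\|_1,$$ and for all $\mu$ with $2\mu>(2^{N+1}+1)\|\mathbf{M}\|_1$, $$\|\mathbf{x}'(\mu)\|_1\le\frac{2N}{2\mu-(2^{N+1}+1)\|\mathbf{M}\|_1}.$$ In particular $\lim_{\mu\to\infty}\mathbf{x}(\mu)=\hat{\mathbf{x}}$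 and $\lim_{\mu\to\infty}\mathbf{x}'(\mu)=0$.
   Context: $S_{N+1}=\{\mathbf{p}\in\mathbb{R}^{N+1}:\mathbf{p}\ge0,\ \sum_i p_i=1\}$. $\mathbf{p}(\mu)$ is the normalized Perron eigenvector of $\mathbf{M}+\mu\mathbf{Q}_N$ for its dominant eigenvalue $\overline{m}(\mu)$. $\|\cdot\|_1$ is the $\ell^1$ norm on vectors and the induced operator norm on matrices (for diagonal $\mathbf{M}$, $\|\mathbf{M}\|_1=\max_k|m_k|$). Primes denote derivatives with respect to $\mu$. *)

(* Defs.v *)
From HB Require Import structures.
From mathcomp Require Import all_boot all_order all_algebra.
From mathcomp Require Import all_classical all_reals topology normedtype derive.
Set Implicit Arguments. Unset Strict Implicit. Unset Printing Implicit Defensive.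
Import Order.TTheory GRing.Theory Num.Theory.
Local Open Scope ring_scope.

Section Defs.
Variable R : realType.

Definition Qmat (N : nat) : 'M[R]_(N.+1) :=
  \matrix_(i, j) (if i == j then - (N%:R)
                  else if (i : nat) == j.+1 then (N - j)%:R
                  else if (i : nat).+1 == j then (j : nat)%:R
                  else 0).

Definition Cmat (N : nat) : 'M[R]_(N.+1) :=
  \matrix_(i, k) (((1 - 'X) ^+ k * (1 + 'X) ^+ (N - k) : {poly R})`_i).

Definition Mdiag (N : nat) (m : 'I_N.+1 -> R) : 'M[R]_(N.+1) :=
  diag_mx (\row_k m k).

Definition l1norm (n : nat) (v : 'cV[R]_n) : R := \sum_i `|v i 0|.

(* induced l^1 operator norm: maximal absolute column sum *)
Definition opnorm1 (n : nat) (A : 'M[R]_n) : R :=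
  \big[Num.max/0]_j \sum_i `|A i j|.

Definition xhat (N : nat) : 'cV[R]_(N.+1) :=
  \col_i (if (i : nat) == 0%N then (2%:R ^- N) else 0).

End Defs.

(* Main.v *)
Require Import Defs.
From HB Require Import structures.
From mathcomp Require Import all_boot all_order all_algebra.
From mathcomp Require Import all_classical all_reals topology normedtype derive.
From mathcomp Require Import ring lra zify.
Set Implicit Arguments. Unset Strict Implicit. Unset Printing Implicit Defensive.
Import Order.TTheory GRing.Theory Num.Theory.
Local Open Scope ring_scope.

Section Alg.
Variable R : realType.
Variable N : nat.

Definition phi (k : nat) : {poly R} := (1 - 'X) ^+ k * (1 + 'X) ^+ (N - k).

Lemma Cmat_phi i k : Cmat R N i k = (phi k)`_i.
Proof. by rewrite mxE. Qed.

Lemma size_lin (s : R) : (size ((1 + s *: 'X)%R : {poly R}) <= 2)%N.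
Proof.
apply: leq_trans (size_polyD _ _) _; rewrite size_poly1.
by rewrite geq_max /= (leq_trans (size_scale_leq _ _)) // size_polyX.
Qed.

Lemma size_phi (k : nat) : (k <= N)%N -> (size (phi k) <= N.+1)%N.
Proof.
move=> kN; rewrite /phi.
apply: leq_trans (size_polyMleq _ _) _.
have h1 : (size ((1 - 'X : {poly R}) ^+ k)%R <= k.+1)%N.
  apply: leq_trans (size_poly_exp_leq _ _) _.
  have := size_lin (-1); rewrite scaleN1r => h.
  have h' : ((size (1 - 'X : {poly R})%R).-1 <= 1)%N by move: h; case: (size _) => [|[|[|n]]].
  by rewrite ltnS (leq_trans (leq_mul h' (leqnn k))) ?mul1n.
have h2 : (size ((1 + 'X : {poly R}) ^+ (N - k))%R <= (N - k).+1)%N.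
  apply: leq_trans (size_poly_exp_leq _ _) _.
  have := size_lin 1; rewrite scale1r => h.
  have h' : ((size (1 + 'X : {poly R})%R).-1 <= 1)%N by move: h; case: (size _) => [|[|[|n]]].
  by rewrite ltnS (leq_trans (leq_mul h' (leqnn _))) ?mul1n.
have := leq_add h1 h2; rewrite addSn addnS subnKC //.
by case: (_ + _)%N.
Qed.

Lemma phi0 k : (phi k)`_0 = 1.
Proof. by rewrite -horner_coef0 /phi !hornerE subr0 !expr1n mulr1. Qed.

Definition Sa (p : {poly R}) := \sum_(i < N.+1) `|p`_i|.

Lemma Sa_ge0 p : 0 <= Sa p.
Proof. by apply: sumr_ge0 => i _. Qed.

Lemma Sa_shift p : \sum_(i < N.+1) `|(p * 'X)`_i| <= Sa p.
Proof.
rewrite big_ord_recl /= coefMX eqxx normr0 add0r /Sa big_ord_recr /=.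
rewrite -[X in X <= _]addr0 lerD //.
apply: ler_sum => i _; rewrite coefMX /=.
by [].
Qed.

Lemma Sa_mul_lin (p : {poly R}) (s : R) : `|s| <= 1 ->
  Sa (p * (1 + s *: 'X)) <= 2 * Sa p.
Proof.
move=> hs; rewrite /Sa mulrDr mulr1 -scalerAr.
apply: (@le_trans _ _ (Sa p + \sum_(i < N.+1) `|(p * 'X)`_i|)).
  rewrite /Sa -big_split /=; apply: ler_sum => i _.
  rewrite coefD coefZ; apply: le_trans (ler_normD _ _) _.
  rewrite lerD // normrM ler_piMl //.
rewrite mulr2n mulrDl mul1r lerD //; exact: Sa_shift.
Qed.

Lemma Sa_pow (p : {poly R}) (s : R) n : `|s| <= 1 ->
  Sa (p * (1 + s *: 'X) ^+ n) <= 2 ^+ n * Sa p.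
Proof.
move=> hs; elim: n => [|n IH]; first by rewrite !expr0 mulr1 mul1r.
rewrite exprSr mulrA; apply: le_trans (Sa_mul_lin _ hs) _.
by rewrite exprSr (mulrC (2 ^+ n)) -mulrA; apply: ler_wpM2l.
Qed.

Lemma Sa1 : Sa 1 = 1.
Proof.
rewrite /Sa big_ord_recl coef1 eqxx normr1 big1 ?addr0 // => i _.
by rewrite coef1 /= normr0.
Qed.

Lemma Sa_phi k : (k <= N)%N -> Sa (phi k) <= 2 ^+ N.
Proof.
move=> kN; rewrite /phi.
have eA : (1 - 'X : {poly R}) = 1 + (-1) *: 'X by rewrite scaleN1r.
have eB : (1 + 'X : {poly R}) = 1 + 1 *: 'X by rewrite scale1r.
rewrite eA eB -[_ ^+ k]mul1r.
apply: le_trans (Sa_pow _ _ _) _; first by rewrite normr1.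
rewrite [X in _ <= X](_ : _ = 2 ^+ (N - k) * 2 ^+ k); last by rewrite -exprD subnK.
apply: ler_wpM2l; first exact: exprn_ge0.
apply: le_trans (Sa_pow _ _ _) _; first by rewrite normrN normr1.
by rewrite Sa1 mulr1.
Qed.


Lemma phi_horner k t : (phi k).[t] = (1 - t) ^+ k * (1 + t) ^+ (N - k).
Proof. by rewrite /phi !hornerE. Qed.

Lemma phi_eval k t : 1 + t != 0 -> (k <= N)%N ->
  (phi k).[t] = (1 + t) ^+ N * ((1 - t) / (1 + t)) ^+ k.
Proof.
move=> ht kN; rewrite phi_horner.
have -> : (1 + t) ^+ N = (1 + t) ^+ k * (1 + t) ^+ (N - k) by rewrite -exprD subnKC.
rewrite expr_div_n; field.
by rewrite expf_neq0.
Qed.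

Lemma split_pow (a : R) j : (j <= N)%N -> a ^+ N = a ^+ j * a ^+ (N - j).
Proof. by move=> jN; rewrite -exprD subnKC. Qed.

Lemma P_eval j t : 1 + t != 0 -> (j <= N)%N ->
  (\sum_(k < N.+1) (phi j)`_k *: phi k).[t] = 2 ^+ N * t ^+ j.
Proof.
move=> ht jN.
rewrite horner_sum.
under eq_bigr => k _ do rewrite hornerZ (phi_eval ht (ltnSE (ltn_ord k))) mulrCA.
rewrite -mulr_sumr -(horner_coef_wide _ (size_phi jN)) phi_horner.
rewrite (split_pow (1 + t) jN) (split_pow 2 jN) mulrACA -!exprMn.
rewrite mulrAC -exprMn.
congr (_ ^+ _ * _ ^+ _); by field.
Qed.

Lemma P_eq j : (j <= N)%N ->
  \sum_(k < N.+1) (phi j)`_k *: phi k = 2 ^+ N *: 'X^j.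
Proof.
move=> jN; apply/eqP; rewrite -subr_eq0; apply/negPn/negP => hne.
have sz : (size (\sum_(k < N.+1) (phi j)`_k *: phi k - 2 ^+ N *: 'X^j : {poly R})%R <= N.+1)%N.
  apply: leq_trans (size_polyD _ _) _; rewrite geq_max; apply/andP; split.
    apply: (big_ind (fun p : {poly R} => (size p <= N.+1)%N)).
    - by rewrite size_poly0.
    - by move=> p q hp hq; apply: leq_trans (size_polyD _ _) _; rewrite geq_max hp hq.
    - move=> k _; apply: leq_trans (size_scale_leq _ _) _.
      exact: size_phi (ltnSE (ltn_ord k)).
  by rewrite size_polyN; apply: leq_trans (size_scale_leq _ _) _; rewrite size_polyXn ltnS.
have := max_poly_roots hne (rs := [seq (i%:R : R) | i <- iota 0 N.+2]).
rewrite size_map size_iota.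
have -> : all (root (\sum_(k < N.+1) (phi j)`_k *: phi k - 2 ^+ N *: 'X^j)) [seq (i%:R : R) | i <- iota 0 N.+2].
  apply/allP => x /mapP [i _ ->]; rewrite /root hornerD hornerN hornerZ hornerXn.
  by rewrite P_eval ?subrr // addrC natr1 pnatr_eq0.
rewrite map_inj_uniq ?iota_uniq; last by move=> a b /eqP; rewrite eqr_nat => /eqP.
move=> /(_ isT isT) h; have := leq_trans h sz; by rewrite ltnS ltnNge leqnSn.
Qed.

Lemma CC : Cmat R N *m Cmat R N = (2 ^+ N)%:M.
Proof.
apply/matrixP => i j; rewrite !mxE.
under eq_bigr => k _ do rewrite !mxE mulrC.
transitivity ((\sum_(k < N.+1) (phi j)`_k *: phi k)`_i).
  by rewrite coef_sum; apply: eq_bigr => k _; rewrite coefZ.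
by rewrite P_eq ?coefZ ?coefXn ?mulr_natr // -ltnS.
Qed.


Lemma sum_eq_if (n : nat) (g : nat -> R) (a : nat) :
  \sum_(j < n) (if a == j then g j else 0) = if (a < n)%N then g a else 0.
Proof.
elim: n => [|n IH]; first by rewrite big_ord0.
rewrite big_ord_recr /= IH [in RHS]ltnS.
case: eqP => e.
- by rewrite e ltnn add0r leqnn.
- rewrite addr0; case: ifP => h1; case: ifP => h2 //; exfalso; lia.
Qed.

Lemma sum_eq_ifS (n : nat) (g : nat -> R) (a : nat) :
  \sum_(j < n) (if a == j.+1 then g j else 0) =
  if a is a'.+1 then (if (a' < n)%N then g a' else 0) else 0.
Proof.
case: a => [|a]; first by rewrite big1.
under eq_bigr => j _ do rewrite eqSS.
exact: sum_eq_if.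
Qed.

Lemma Qsplit (a b : nat) (X Y Z F : R) :
  (if a == b then X else if a == b.+1 then Y else if a.+1 == b then Z else 0) * F =
  (if a == b then X * F else 0) + (if a == b.+1 then Y * F else 0)
  + (if a.+1 == b then Z * F else 0).
Proof.
by case: eqP => h1; case: eqP => h2; case: eqP => h3;
  rewrite ?mul0r ?addr0 ?add0r //; lia.
Qed.

Lemma Qrow (f : {poly R}) (i : 'I_N.+1) : (size f <= N.+1)%N ->
  \sum_j Qmat R N i j * f`_j =
  - (N%:R) * f`_i + (if (i : nat) is i'.+1 then (N - i')%:R * f`_i' else 0)
  + (i.+1)%:R * f`_(i.+1).
Proof.
move=> sf.
under eq_bigr => j _ do rewrite mxE -val_eqE Qsplit.
rewrite !big_split /=.
rewrite [X in X + _ + _](sum_eq_if N.+1 (fun j : nat => - (N%:R) * f`_j) i).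
rewrite [X in _ + X + _](sum_eq_ifS N.+1 (fun j : nat => (N - j)%:R * f`_j) i).
rewrite [X in _ + _ + X](sum_eq_if N.+1 (fun j : nat => j%:R * f`_j) i.+1).
rewrite ltn_ord; congr (_ + _ + _).
  by case: (nat_of_ord i) (ltn_ord i) => [|i'] // /ltnW ->.
case: ltnP => // h.
by rewrite nth_default ?mulr0 // (leq_trans sf).
Qed.

Definition op (f : {poly R}) : {poly R} :=
  - (N%:R) *: f + N%:R *: ('X * f) + f^`() - 'X * ('X * f^`()).

Lemma op_coef f i : (op f)`_i =
  - (N%:R) * f`_i + (if i is i'.+1 then (N%:R - i'%:R) * f`_i' else 0)
  + (i.+1)%:R * f`_(i.+1).
Proof.
rewrite /op !coefD coefN !coefZ !coefXM coef_deriv.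
case: i => [|[|i]]; rewrite ?eqxx ?coef_deriv.
- rewrite mulr0 subr0 addr0 -[f`_1 *+ 1]mulr_natr; ring.
- rewrite (_ : (1 == 0)%N = false) // subr0 subr0 -[f`_2 *+ 2]mulr_natr.
  rewrite -[1%N.-1]/0%N; ring.
- rewrite (_ : (i.+2 == 0)%N = false) // (_ : (i.+2.-1 == 0)%N = false) //.
  rewrite -[i.+2.-1]/(i.+1) -[i.+2.-2.+1]/(i.+1).
  rewrite -[f`_i.+3 *+ _]mulr_natr -[f`_i.+1 *+ _]mulr_natr; ring.
Qed.

Lemma dpow (p : {poly R}) n : p * (p^`() * p ^+ n.-1 *+ n) = p^`() * p ^+ n *+ n.
Proof.
case: n => [|n]; first by rewrite !mulr0n mulr0.
by rewrite -[n.+1.-1]/n exprS -!mulrnAr mulrCA.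
Qed.

Lemma op_phi k : (k <= N)%N -> op (phi k) = - (2 * k)%:R *: phi k.
Proof.
move=> kN.
have E : (phi k)^`() - 'X * ('X * (phi k)^`()) =
  (1 + 'X) * (1 + 'X) ^+ (N - k) * ((1 - 'X) * ((1 - 'X) ^+ k)^`())
  + (1 - 'X) * (1 - 'X) ^+ k * ((1 + 'X) * ((1 + 'X) ^+ (N - k))^`()).
  rewrite /phi derivM.
  move: ((1 - 'X : {poly R}) ^+ k) ((1 + 'X : {poly R}) ^+ (N - k)) => a b.
  move: (a^`()) (b^`()) => da db.
  ring.
rewrite /op -addrA E !deriv_exp !dpow.
have d1 : (1 : {poly R})^`() = 0 by rewrite -polyC1 derivC.
rewrite derivB derivD derivX d1 sub0r add0r.
rewrite -[_ *+ k]mulr_natr -[_ *+ (N - k)]mulr_natr.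
rewrite -!mul_polyC !polyCN !polyC_natr natrM natrB // /phi.
move: ((1 - 'X : {poly R}) ^+ k) ((1 + 'X : {poly R}) ^+ (N - k)) => a b.
ring.
Qed.

Definition Dm : 'M[R]_N.+1 := diag_mx (\row_(k < N.+1) (- (2 * k)%:R)).

Lemma QC : Qmat R N *m Cmat R N = Cmat R N *m Dm.
Proof.
apply/matrixP => i k; rewrite mul_mx_diag !mxE.
under eq_bigr => j _ do rewrite Cmat_phi.
rewrite Qrow ?size_phi ?(ltnSE (ltn_ord k)) //.
have := congr1 (fun p : {poly R} => p`_i) (op_phi (ltnSE (ltn_ord k))).
rewrite op_coef coefZ => H.
transitivity (- (2 * k)%:R * (phi k)`_i); last by rewrite mulrC.
rewrite -H; congr (_ + _ + _).
by move: (ltn_ord i); case: (nat_of_ord i) => [|i'] // hi; rewrite natrB //; lia.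
Qed.


End Alg.

Section Norms.
Variable R : realType.
Variable N : nat.
Variable m : 'I_N.+1 -> R.

Local Notation C := (Cmat R N).
Local Notation M := (Mdiag m).
Local Notation l1 := (@l1norm R N.+1).
Definition nM := opnorm1 (Mdiag m).
Definition mrow : 'rV[R]_N.+1 := \row_i m i.
Definition Ci : 'M[R]_N.+1 := (2 ^- N) *: C.

Lemma CCi : C *m Ci = 1%:M.
Proof.
by rewrite /Ci -scalemxAr CC scale_scalar_mx mulVf // expf_neq0 // pnatr_eq0.
Qed.

Lemma Cunit : C \in unitmx.
Proof. by case: (mulmx1_unit CCi). Qed.

Lemma invC : invmx C = Ci.
Proof.
have h := mulmxV Cunit.
by rewrite -[invmx C]mul1mx -(mulmx1C CCi) -mulmxA h mulmx1.
Qed.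

Lemma l1_ge0 v : 0 <= l1 v.
Proof. by apply: sumr_ge0 => i _. Qed.

Lemma l1D u v : l1 (u + v) <= l1 u + l1 v.
Proof.
rewrite /l1norm -big_split /=; apply: ler_sum => i _; rewrite mxE; exact: ler_normD.
Qed.

Lemma l1N u : l1 (- u) = l1 u.
Proof. by apply: eq_bigr => i _; rewrite mxE normrN. Qed.

Lemma l1Z a u : l1 (a *: u) = `|a| * l1 u.
Proof. by rewrite /l1norm mulr_sumr; apply: eq_bigr => i _; rewrite mxE normrM. Qed.

Lemma l1B u v : l1 (u - v) <= l1 u + l1 v.
Proof. by apply: le_trans (l1D _ _) _; rewrite l1N. Qed.

Lemma l1_C v : l1 (C *m v) <= 2 ^+ N * l1 v.
Proof.
rewrite /l1norm.
apply: (@le_trans _ _ (\sum_i \sum_k `|C i k| * `|v k 0|)).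
  apply: ler_sum => i _; rewrite mxE; apply: le_trans (ler_norm_sum _ _ _) _.
  by apply: ler_sum => k _; rewrite normrM.
rewrite exchange_big /= mulr_sumr; apply: ler_sum => k _.
rewrite -mulr_suml ler_wpM2r //.
have := @Sa_phi R N k (ltnSE (ltn_ord k)); rewrite /Sa => h.
by apply: le_trans h; rewrite le_eqVlt; apply/orP; left; apply/eqP; apply: eq_bigr => i _; rewrite Cmat_phi.
Qed.

Lemma l1_Ci v : l1 (Ci *m v) <= l1 v.
Proof.
rewrite /Ci -scalemxAl l1Z.
have h := l1_C v.
rewrite ger0_norm ?invr_ge0 ?exprn_ge0 //.
rewrite -(ler_pM2l (exprn_gt0 N (ltr0n R 2))) mulrA mulfV ?mul1r //.
by rewrite expf_neq0 // pnatr_eq0.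
Qed.

Lemma normM_le i : `|m i| <= nM.
Proof.
apply: le_trans (Order.TotalTheory.le_bigmax _ _ i).
rewrite (bigD1 i) //= /Mdiag mxE mxE eqxx mulr1n.
rewrite -[X in X <= _]addr0 lerD //; apply: sumr_ge0 => j _; exact: normr_ge0.
Qed.

Lemma nM_ge0 : 0 <= nM.
Proof. exact: le_trans (normr_ge0 _) (normM_le ord0). Qed.

Lemma l1_M v : l1 (M *m v) <= nM * l1 v.
Proof.
rewrite /l1norm mulr_sumr; apply: ler_sum => i _.
rewrite /Mdiag mul_diag_mx !mxE normrM ler_wpM2r //; exact: normM_le.
Qed.

Lemma s_le v : `|(mrow *m v) 0 0| <= nM * l1 v.
Proof.
rewrite mxE /l1norm mulr_sumr; apply: le_trans (ler_norm_sum _ _ _) _.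
apply: ler_sum => i _; rewrite mxE normrM ler_wpM2r //; exact: normM_le.
Qed.

End Norms.

Section Dlem.
Variable R : realType.
Variable N : nat.
Local Notation l1 := (@l1norm R N.+1).

Lemma Dm_l1 (v : 'cV[R]_N.+1) : l1 (Dm R N *m v) <= (2 * N)%:R * l1 v.
Proof.
rewrite /l1norm mulr_sumr; apply: ler_sum => i _.
rewrite /Dm mul_diag_mx !mxE normrM normrN ler_wpM2r // ger0_norm // ler_nat.
by rewrite leq_mul2l ltnSE ?orbT // (ltn_ord i).
Qed.

Lemma Dm_low (v : 'cV[R]_N.+1) : v ord0 0 = 0 -> 2 * l1 v <= l1 (Dm R N *m v).
Proof.
move=> v0; rewrite /l1norm mulr_sumr; apply: ler_sum => i _.
rewrite /Dm mul_diag_mx !mxE normrM normrN (ger0_norm (ler0n _ _)).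
case: (eqVneq i ord0) => [->|ne]; first by rewrite v0 normr0 !mulr0.
rewrite ler_wpM2r // natrM ler_peMr // ler1n lt0n.
by apply: contra ne => /eqP h; apply/eqP/val_inj.
Qed.

End Dlem.

Section Main.
Variable R : realType.
Variable N : nat.
Variable m : 'I_N.+1 -> R.
Variable p : R -> 'cV[R]_(N.+1).
Hypothesis hp_pos : forall mu : R, 0 < mu -> forall i, 0 < p mu i 0.
Hypothesis hp_sum : forall mu : R, 0 < mu -> \sum_i p mu i 0 = 1.
Hypothesis hp_eig : forall mu : R, 0 < mu ->
     (Mdiag m + mu *: Qmat R N) *m p mu = (\sum_i m i * p mu i 0) *: p mu.

Local Notation C := (Cmat R N).
Local Notation M := (Mdiag m).
Local Notation l1 := (@l1norm R N.+1).
Local Notation Ci := (Ci R N).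
Local Notation D := (Dm R N).
Local Notation nM := (nM m).

Definition x mu := Ci *m p mu.
Definition s (v : 'cV[R]_N.+1) := (mrow m *m (C *m v)) 0 0.
Definition mb mu := s (x mu).
Definition G (v : 'cV[R]_N.+1) := Ci *m (M *m (C *m v)).

Lemma CiC : Ci *m C = 1%:M.
Proof. exact: mulmx1C (CCi R N). Qed.

Lemma Cx mu : C *m x mu = p mu.
Proof. by rewrite /x mulmxA CCi mul1mx. Qed.

Lemma x0 mu : 0 < mu -> x mu ord0 0 = 2 ^- N.
Proof.
move=> hmu; rewrite /x /Ci -scalemxAl mxE mxE -[RHS]mulr1 -(hp_sum hmu).
congr (_ * _); apply: eq_bigr => k _; by rewrite Cmat_phi phi0 mul1r.
Qed.

Lemma l1p mu : 0 < mu -> l1 (p mu) = 1.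
Proof.
move=> hmu; rewrite -(hp_sum hmu); apply: eq_bigr => i _.
by rewrite ger0_norm // ltW // hp_pos.
Qed.

Lemma l1x mu : 0 < mu -> l1 (x mu) <= 1.
Proof. by move=> hmu; rewrite -(l1p hmu); apply: l1_Ci. Qed.

Lemma mbE mu : mb mu = \sum_i m i * p mu i 0.
Proof. by rewrite /mb /s Cx mxE; apply: eq_bigr => i _; rewrite mxE. Qed.

Lemma mb_le mu : 0 < mu -> `|mb mu| <= nM.
Proof.
move=> hmu; rewrite /mb /s Cx; apply: le_trans (s_le _ _) _.
by rewrite l1p // mulr1.
Qed.

Lemma EQ mu : 0 < mu -> mu *: (D *m x mu) = mb mu *: x mu - G (x mu).
Proof.
move=> hmu.
have E2 := congr1 (mulmx Ci) (hp_eig hmu).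
rewrite mulmxDl mulmxDr -scalemxAl -scalemxAr -scalemxAr -/(x mu) -mbE in E2.
rewrite -(Cx mu) (mulmxA (Qmat R N)) QC in E2.
rewrite -!mulmxA (mulmxA Ci C) CiC mul1mx in E2.
by rewrite -E2 /G [_ + mu *: _]addrC addrK.
Qed.

Definition cst0 := (2 ^+ N.+1 + 1 : R).

Lemma KL (mu0 : R) (y w r : 'cV[R]_N.+1) (a : R) :
  0 <= mu0 -> w ord0 0 = 0 -> l1 y <= 1 -> `|a| <= nM ->
  mu0 *: (D *m w) = r + a *: w + s w *: y - G w ->
  (2 * mu0 - cst0 * nM) * l1 w <= l1 r.
Proof.
move=> hmu w0 hy ha E.
have h1 : 2 * mu0 * l1 w <= l1 (mu0 *: (D *m w)).
  by rewrite l1Z ger0_norm // (mulrC 2) -mulrA ler_wpM2l // Dm_low.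
rewrite E in h1.
have hCw := @l1_C R N w.
have hs : `|s w| <= nM * (2 ^+ N * l1 w).
  apply: le_trans (s_le _ _) _; by apply: ler_wpM2l; [exact: nM_ge0 | exact: hCw].
have hG : l1 (G w) <= nM * (2 ^+ N * l1 w).
  apply: le_trans (l1_Ci _) _; apply: le_trans (@l1_M R N m _) _.
  by apply: ler_wpM2l; [exact: nM_ge0 | exact: hCw].
have hsy : l1 (s w *: y) <= nM * (2 ^+ N * l1 w).
  rewrite l1Z; apply: le_trans hs; rewrite -[X in _ <= X]mulr1 ler_wpM2l //.
have haw : l1 (a *: w) <= nM * l1 w by rewrite l1Z ler_wpM2r // l1_ge0.
have h2 := l1B (r + a *: w + s w *: y) (G w).
have h3 := l1D (r + a *: w) (s w *: y).
have h4 := l1D r (a *: w).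
rewrite /cst0 exprS.
have h5 := l1_ge0 w. have h6 : 0 <= nM by exact: nM_ge0.
set L := l1 w in h1 h5 hs hG hsy haw *.
set P := 2 ^+ N in hs hG hsy *.
nra.
Qed.

End Main.

Import numFieldNormedType.Exports.
Local Open Scope classical_set_scope.

Section Deriv.
Variable R : realType.
Variable N : nat.
Variable m : 'I_N.+1 -> R.
Variable p : R -> 'cV[R]_(N.+1).
Hypothesis hp_pos : forall mu : R, 0 < mu -> forall i, 0 < p mu i 0.
Hypothesis hp_sum : forall mu : R, 0 < mu -> \sum_i p mu i 0 = 1.
Hypothesis hp_eig : forall mu : R, 0 < mu ->
     (Mdiag m + mu *: Qmat R N) *m p mu = (\sum_i m i * p mu i 0) *: p mu.

Local Notation C := (Cmat R N).
Local Notation M := (Mdiag m).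
Local Notation l1 := (@l1norm R N.+1).
Local Notation Ci := (Ci R N).
Local Notation D := (Dm R N).
Local Notation nM := (nM m).
Local Notation x := (x p).
Local Notation s := (s m).
Local Notation mb := (mb m p).
Local Notation G := (G m).

Let EQ mu (h : 0 < mu) := @EQ R N m p hp_eig mu h.
Let x0 mu (h : 0 < mu) := @x0 R N p hp_sum mu h.
Let l1x mu (h : 0 < mu) := @l1x R N p hp_pos hp_sum mu h.
Let mb_le mu (h : 0 < mu) := @mb_le R N m p hp_pos hp_sum mu h.

Lemma sB u v : s (u - v) = s u - s v.
Proof. by rewrite /s mulmxBr mulmxBr mxE mxE mxE. Qed.
Lemma sZ a v : s (a *: v) = a * s v.
Proof. by rewrite /s -scalemxAr -scalemxAr mxE. Qed.
Lemma GB u v : G (u - v) = G u - G v.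
Proof. by rewrite /G !mulmxBr. Qed.
Lemma GZ a v : G (a *: v) = a *: G v.
Proof. by rewrite /G -!scalemxAr. Qed.

Lemma Dxhat : D *m xhat R N = 0.
Proof.
apply/matrixP => i j; rewrite /Dm mul_diag_mx !mxE.
case: eqP => [->|_]; last by rewrite mulr0.
by rewrite muln0 oppr0 mul0r.
Qed.

Lemma part1 mu : 0 < mu -> l1 (x mu - xhat R N) <= nM / mu.
Proof.
move=> hmu.
have w0 : (x mu - xhat R N) ord0 0 = 0.
  have := x0 hmu; move: (x mu) => X hX; by rewrite !mxE hX subrr.
have h1 := Dm_low w0.
rewrite mulmxBr Dxhat subr0 in h1.
have h2 : l1 (mu *: (D *m x mu)) <= 2 * nM.
  rewrite EQ // /G Cx /x scalemxAr -mulmxBr.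
  apply: le_trans (l1_Ci _) _.
  rewrite /l1norm.
  apply: (@le_trans _ _ (\sum_i (2 * nM) * p mu i 0)).
    apply: ler_sum => i _; rewrite /Mdiag mul_diag_mx !mxE.
    rewrite -mulrBl normrM (ger0_norm (ltW (hp_pos hmu i))) ler_wpM2r ?(ltW (hp_pos hmu i)) //.
    apply: le_trans (ler_normB _ _) _.
    by rewrite mulr2n mulrDl mul1r lerD // ?mb_le // normM_le.
  by rewrite -mulr_sumr hp_sum // mulr1.
rewrite l1Z gtr0_norm // in h2.
rewrite ler_pdivlMr //.
have := l1_ge0 (x mu - xhat R N); nra.
Qed.


Definition q mu0 h := h^-1 *: (x (h + mu0) - x mu0).

Lemma GX mu : 0 < mu -> G (x mu) = mb mu *: x mu - mu *: (D *m x mu).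
Proof. by move=> h; rewrite EQ // opprB addrC subrK. Qed.

Lemma Iq mu0 h : 0 < mu0 -> 0 < h + mu0 -> h != 0 ->
  mu0 *: (D *m q mu0 h) = - (D *m x (h + mu0)) + mb mu0 *: q mu0 h
     + s (q mu0 h) *: x (h + mu0) - G (q mu0 h).
Proof.
move=> h0 hb hn.
rewrite /q GZ GB sZ sB -scalemxAr mulmxBr !GX //.
rewrite -/(mb (h + mu0)) -/(mb mu0).
move: (D *m x (h + mu0)) (D *m x mu0) (x (h + mu0)) (x mu0) (mb (h + mu0)) (mb mu0).
move=> DX DY X Y a b.
apply/matrixP => i j; rewrite !mxE; field; exact: hn.
Qed.


Lemma Ie mu0 h h' : 0 < mu0 -> 0 < h + mu0 -> 0 < h' + mu0 -> h != 0 -> h' != 0 ->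
  mu0 *: (D *m (q mu0 h - q mu0 h')) =
    (- (D *m x (h + mu0)) + D *m x (h' + mu0) + s (q mu0 h') *: (x (h + mu0) - x (h' + mu0)))
    + mb mu0 *: (q mu0 h - q mu0 h') + s (q mu0 h - q mu0 h') *: x (h + mu0)
    - G (q mu0 h - q mu0 h').
Proof.
move=> h0 hb hb' hn hn'.
rewrite mulmxBr scalerBr !Iq // GB sB.
move: (D *m x (h + mu0)) (D *m x (h' + mu0)) (x (h + mu0)) (x (h' + mu0)) (mb mu0).
move: (q mu0 h) (q mu0 h') (G (q mu0 h)) (G (q mu0 h')) (s (q mu0 h)) (s (q mu0 h')).
move=> Q1 Q2 G1 G2 s1 s2 DX DX' X X' a.
apply/matrixP => i j; rewrite !mxE; ring.
Qed.

Lemma q0 mu0 h : 0 < mu0 -> 0 < h + mu0 -> q mu0 h ord0 0 = 0.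
Proof.
move=> h0 hb; rewrite /q.
have := x0 hb; have := x0 h0.
move: (x (h + mu0)) (x mu0) => X Y hY hX.
by rewrite !mxE hX hY subrr mulr0.
Qed.

Definition K0 mu0 := 2 * mu0 - cst0 R N * nM.

Lemma mu0_pos mu0 : cst0 R N * nM < 2 * mu0 -> 0 < mu0.
Proof.
move=> h; have : 0 <= cst0 R N * nM.
  by rewrite mulr_ge0 ?nM_ge0 // /cst0 addr_ge0 ?exprn_ge0.
lra.
Qed.

Lemma qbound mu0 h : cst0 R N * nM < 2 * mu0 -> 0 < h + mu0 -> h != 0 ->
  K0 mu0 * l1 (q mu0 h) <= (2 * N)%:R.
Proof.
move=> hK hb hn; have h0 := mu0_pos hK.
have := @KL R N m mu0 (x (h + mu0)) (q mu0 h) (- (D *m x (h + mu0))) (mb mu0)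
  (ltW h0) (q0 h0 hb) (l1x hb) (mb_le h0) (Iq h0 hb hn).
move=> H; apply: le_trans H _; rewrite l1N.
apply: le_trans (Dm_l1 _) _.
by rewrite -[X in _ <= X]mulr1 ler_wpM2l // l1x.
Qed.


Lemma qE mu0 h i j : q mu0 h i j = h^-1 * (x (h + mu0) i j - x mu0 i j).
Proof. by rewrite /q; move: (x (h + mu0)) (x mu0) => X Y; rewrite !mxE. Qed.

Lemma xq mu0 h : h != 0 -> x (h + mu0) - x mu0 = h *: q mu0 h.
Proof. by move=> hn; rewrite /q scalerA mulfV // scale1r. Qed.

Lemma K0_pos mu0 : cst0 R N * nM < 2 * mu0 -> 0 < K0 mu0.
Proof. by rewrite /K0 subr_gt0. Qed.

Lemma lipx mu0 h : cst0 R N * nM < 2 * mu0 -> 0 < h + mu0 ->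
  K0 mu0 * l1 (x (h + mu0) - x mu0) <= (2 * N)%:R * `|h|.
Proof.
move=> hK hb; case: (eqVneq h 0) => [->|hn].
  rewrite add0r subrr normr0 mulr0.
  rewrite (_ : l1 0 = 0) ?mulr0 //; rewrite /l1norm big1 // => i _; by rewrite mxE normr0.
rewrite xq // l1Z mulrCA mulrC ler_wpM2r //; exact: qbound.
Qed.

Lemma ebound mu0 h h' : cst0 R N * nM < 2 * mu0 -> 0 < h + mu0 -> 0 < h' + mu0 ->
  h != 0 -> h' != 0 ->
  K0 mu0 ^+ 3 * l1 (q mu0 h - q mu0 h') <=
  ((2 * N)%:R * K0 mu0 + nM * 2 ^+ N * (2 * N)%:R) * (2 * N)%:R * (`|h| + `|h'|).
Proof.
move=> hK hb hb' hn hn'; have h0 := mu0_pos hK; have k0 := K0_pos hK.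
set X := x (h + mu0); set X' := x (h' + mu0).
have e0 : (q mu0 h - q mu0 h') ord0 0 = 0.
  have := q0 h0 hb; have := q0 h0 hb'.
  move: (q mu0 h) (q mu0 h') => Q1 Q2 h1 h2; by rewrite !mxE h1 h2 subrr.
have H := @KL R N m mu0 X _ _ (mb mu0) (ltW h0) e0 (l1x hb) (mb_le h0) (Ie h0 hb hb' hn hn').
have Hr : l1 (- (D *m X) + D *m X' + s (q mu0 h') *: (X - X')) <=
    ((2 * N)%:R + nM * (2 ^+ N * l1 (q mu0 h'))) * l1 (X - X').
  have E1 : - (D *m X) + D *m X' = D *m (X' - X) by rewrite mulmxBr addrC.
  rewrite E1.
  apply: le_trans (l1D _ _) _; rewrite l1Z mulrDl lerD //.
    apply: le_trans (Dm_l1 _) _; by rewrite -opprB l1N.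
  rewrite ler_wpM2r ?l1_ge0 //; apply: le_trans (s_le _ _) _.
  by rewrite ler_wpM2l ?nM_ge0 // l1_C.
have Hx : K0 mu0 * l1 (X - X') <= (2 * N)%:R * (`|h| + `|h'|).
  have -> : X - X' = (X - x mu0) - (X' - x mu0) by rewrite opprB addrA subrK.
  apply: le_trans (ler_wpM2l (ltW k0) (l1B _ _)) _.
  by rewrite mulrDr mulrDr lerD // lipx.
have Hq := qbound hK hb' hn'.
have g1 := l1_ge0 (q mu0 h - q mu0 h').
have g2 := l1_ge0 (q mu0 h').
have g3 := l1_ge0 (X - X').
have g4 : 0 <= nM by exact: nM_ge0.
have g5 : 0 < 2 ^+ N :> R by rewrite exprn_gt0.
have g6 : 0 <= (2 * N)%:R :> R by [].
have g7 : 0 <= `|h| + `|h'| by rewrite addr_ge0.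
set Le := l1 (q mu0 h - q mu0 h') in H g1 *.
set Lq := l1 (q mu0 h') in Hr Hq g2.
set Lx := l1 (X - X') in Hr Hx g3.
set B := (2 * N)%:R in Hr Hx Hq g6 *.
set P := 2 ^+ N in Hr g5 *.
set K := K0 mu0 in H Hx Hq k0 *.
set S := `|h| + `|h'| in Hx g7 *.
set c := nM in Hr g4 *.
rewrite /K0 -/K in H.
have H1 : K * Le <= (B + c * (P * Lq)) * Lx := le_trans H Hr.
have H2 : K * (K * Le) <= (B * K + c * P * B) * Lx.
  have cP : 0 <= c * P * Lx by rewrite !mulr_ge0 // ltW.
  have := ler_wpM2l (ltW k0) H1.
  have := ler_wpM2r cP Hq.
  nra.
have H3 : K * (K * (K * Le)) <= (B * K + c * P * B) * (B * S).
  have cP : 0 <= B * K + c * P * B by rewrite addr_ge0 // !mulr_ge0 // ltW.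
  have := ler_wpM2l (ltW k0) H2.
  have := ler_wpM2l cP Hx.
  nra.
have -> : K ^+ 3 * Le = K * (K * (K * Le)) by rewrite !exprS expr0 mulr1 !mulrA.
by apply: le_trans H3 _; rewrite mulrA.
Qed.


Lemma entry_le (v : 'cV[R]_N.+1) i : `|v i 0| <= l1 v.
Proof.
rewrite /l1norm (bigD1 i) //= lerDl; apply: sumr_ge0 => j _; exact: normr_ge0.
Qed.

Definition Kc mu0 := (((2 * N)%:R * K0 mu0 + nM * 2 ^+ N * (2 * N)%:R) * (2 * N)%:R)
   / K0 mu0 ^+ 3.

Lemma Kc_ge0 mu0 : cst0 R N * nM < 2 * mu0 -> 0 <= Kc mu0.
Proof.
move=> hK; have k0 := K0_pos hK; have g4 : 0 <= nM by exact: nM_ge0.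
rewrite /Kc; apply: divr_ge0; last exact: exprn_ge0 (ltW k0).
apply: mulr_ge0 => //; apply: addr_ge0.
  by apply: mulr_ge0 => //; exact: ltW.
by apply: mulr_ge0 => //; apply: mulr_ge0 => //; exact: exprn_ge0.
Qed.

Lemma qdiff mu0 h h' i : cst0 R N * nM < 2 * mu0 -> 0 < h + mu0 -> 0 < h' + mu0 ->
  h != 0 -> h' != 0 ->
  `|q mu0 h i 0 - q mu0 h' i 0| <= Kc mu0 * (`|h| + `|h'|).
Proof.
move=> hK hb hb' hn hn'; have k0 := K0_pos hK.
have := ebound hK hb hb' hn hn'.
have -> : q mu0 h i 0 - q mu0 h' i 0 = (q mu0 h - q mu0 h') i 0.
  by move: (q mu0 h) (q mu0 h') => Q1 Q2; rewrite !mxE.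
have := entry_le (q mu0 h - q mu0 h') i.
move: (l1 _) => Le hle H.
rewrite /Kc mulrAC ler_pdivlMr ?exprn_gt0 //.
apply: le_trans H; rewrite mulrC ler_wpM2l // exprn_ge0 // ltW //.
Qed.

Lemma cvg_q mu0 i : cst0 R N * nM < 2 * mu0 ->
  cvg ((fun h => q mu0 h i 0) @ 0^').
Proof.
move=> hK; have h0 := mu0_pos hK; have kc := Kc_ge0 hK.
apply/cauchy_cvgP; apply: cauchy_exP => e he.
set d := Num.min (mu0 / 2) (e / (2 * Kc mu0 + 1)).
have dpos : 0 < d by rewrite lt_min divr_gt0 //= divr_gt0 // ltr_wpDl // mulr_ge0.
have d1 : d <= mu0 / 2 by rewrite ge_min lexx.
have d2 : d * (2 * Kc mu0 + 1) <= e.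
  rewrite -ler_pdivlMr; first by rewrite ge_min lexx orbT.
  by rewrite ltr_wpDl // mulr_ge0.
exists (q mu0 (d / 2) i 0).
have F1 : \forall h \near (0 : R)^', h != 0 := nbhs_dnbhs_neq 0.
have F2 : \forall h \near (0 : R)^', `|h| < d.
  exact: dnbhs0_lt.
suff H : \forall h \near (0:R)^', ball (q mu0 (d / 2) i 0) e (q mu0 h i 0) by exact: H.
apply: filterS (filterI F1 F2) => h [hn hlt].
rewrite /ball /=.
have hd0 : d / 2 != 0 by apply: lt0r_neq0; rewrite divr_gt0.
have hb0 : 0 < d / 2 + mu0 by rewrite addr_gt0 // divr_gt0.
have hb : 0 < h + mu0.
  have H1 : `|h| < mu0 by lra.
  have := ler_norm (- h); rewrite normrN; lra.
apply: le_lt_trans (qdiff i hK hb0 hb hd0 hn) _.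
have n0 : `|d / 2| = d / 2 by rewrite ger0_norm // divr_ge0 // ltW.
rewrite n0.
nra.
Qed.


Lemma der_x mu0 i : cst0 R N * nM < 2 * mu0 -> derivable (fun t : R => x t i 0) mu0 1.
Proof.
move=> hK; rewrite /derivable.
rewrite (@eq_is_cvg _ _ _ _ (fun h => q mu0 h i 0)); first exact: cvg_q.
by move=> h /=; rewrite qE [h%:A]mulr1.
Qed.

Lemma derive_x mu0 i : derive1 (fun t : R => x t i 0) mu0 = lim ((fun h => q mu0 h i 0) @ 0^').
Proof.
rewrite /derive1; f_equal; f_equal; apply: funext => h; by rewrite qE.
Qed.

Lemma dsum mu0 : cst0 R N * nM < 2 * mu0 ->
  \sum_i `|derive1 (fun t : R => x t i 0) mu0| <= (2 * N)%:R / K0 mu0.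
Proof.
move=> hK; have k0 := K0_pos hK; have h0 := mu0_pos hK.
under eq_bigr => i _ do rewrite derive_x.
set L := fun i => lim ((fun h => q mu0 h i 0) @ 0^').
have S := @cvg_big R 'I_N.+1 +%R 0 (fun _ => true) add_continuous R (0:R)^'
  (index_enum 'I_N.+1) (fun i h => `|q mu0 h i 0|) (fun i => `|L i|)
  (dnbhs_filter 0) (fun i _ => cvg_norm (@cvg_q mu0 i hK)).
have {}S := S (dnbhs_filter 0).
rewrite -(cvg_lim _ S); last exact: Rhausdorff.
apply: limr_le; first exact: cvgP S.
have F1 : \forall h \near (0 : R)^', h != 0 := nbhs_dnbhs_neq 0.
have F2 : \forall h \near (0 : R)^', `|h| < mu0 by exact: dnbhs0_lt.
apply: filterS (filterI F1 F2) => h [hn hlt].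
have hb : 0 < h + mu0 by have := ler_norm (- h); rewrite normrN; lra.
have := qbound hK hb hn; rewrite /l1norm => H.
by rewrite ler_pdivlMr // mulrC.
Qed.

End Deriv.

Unset Implicit Arguments.
Set Strict Implicit.

Theorem theorem1 (R : realType) (N : nat) (hN : (1 <= N)%N)
  (m : 'I_N.+1 -> R) (p : R -> 'cV[R]_(N.+1))
  (hp_pos : forall mu : R, 0 < mu -> forall i, 0 < p mu i 0)
  (hp_sum : forall mu : R, 0 < mu -> \sum_i p mu i 0 = 1)
  (hp_eig : forall mu : R, 0 < mu ->
     (Mdiag m + mu *: Qmat R N) *m p mu = (\sum_i m i * p mu i 0) *: p mu) :
  let x := fun mu : R => invmx (Cmat R N) *m p mu in
  let nM := opnorm1 (Mdiag m) in
  (forall mu : R, 0 < mu -> l1norm (x mu - xhat R N) <= nM / mu) /\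
  (forall mu : R, (2%:R ^+ N.+1 + 1) * nM < 2%:R * mu ->
     (forall i, derivable (fun t : R => x t i 0) mu 1) /\
     \sum_i `|derive1 (fun t : R => x t i 0) mu|
       <= (2 * N)%:R / (2%:R * mu - (2%:R ^+ N.+1 + 1) * nM)) /\
  (forall i, (fun t : R => x t i 0) @ +oo --> xhat R N i 0) /\
  (forall i, (fun t : R => derive1 (fun s : R => x s i 0) t) @ +oo --> (0 : R)).
Proof.
move=> xx nn.
have -> : xx = x p by apply: funext => t; rewrite /xx invC.
have -> : nn = nM m by [].
have gM : 0 <= nM m by exact: nM_ge0.
split; [|split; [|split]].
- move=> mu hmu; exact: (@part1 R N m p hp_pos hp_sum hp_eig mu hmu).
- move=> mu hK; split.
    move=> i; exact: (@der_x R N m p hp_pos hp_sum hp_eig mu i hK).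
  exact: (@dsum R N m p hp_pos hp_sum hp_eig mu hK).
- move=> i; apply/cvgrPdist_lt => e he.
  have F := @nbhs_pinfty_gt R ((nM m + 1) / e) (num_real _).
  apply: filterS F => t ht.
  have tpos : 0 < t by apply: lt_trans ht; rewrite divr_gt0 // ltr_wpDl.
  have H := @part1 R N m p hp_pos hp_sum hp_eig t tpos.
  have E := entry_le (x p t - xhat R N) i.
  have -> : xhat R N i 0 - x p t i 0 = - (x p t - xhat R N) i 0.
    by move: (x p t) => X; rewrite !mxE opprB.
  rewrite normrN; apply: le_lt_trans E _; apply: le_lt_trans H _.
  rewrite ltr_pdivrMr //; rewrite ltr_pdivrMr // in ht.
  by rewrite mulrC; lra.
- move=> i; apply/cvgrPdist_lt => e he.
  set B := (2 * N)%:R : R.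
  have F := @nbhs_pinfty_gt R ((cst0 R N * nM m + B / e) / 2 + 1) (num_real _).
  apply: filterS F => t ht.
  have gc : 0 <= cst0 R N * nM m by rewrite mulr_ge0 // /cst0 addr_ge0 ?exprn_ge0.
  have gB : 0 <= B / e by rewrite divr_ge0 // ltW.
  have hK : cst0 R N * nM m < 2 * t by lra.
  have H := @dsum R N m p hp_pos hp_sum hp_eig t hK.
  rewrite sub0r normrN.
  apply: le_lt_trans (_ : _ <= \sum_j `|derive1 (fun s : R => x p s j 0) t|) _.
    by rewrite (bigD1 i) //= lerDl; apply: sumr_ge0 => j _; exact: normr_ge0.
  apply: le_lt_trans H _.
  have k0 : 0 < K0 m t by rewrite /K0 subr_gt0.
  rewrite ltr_pdivrMr // /K0.
  have : B < e * (2 * t - cst0 R N * nM m).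
    have hBe : B = e * (B / e) by rewrite mulrC divfK // gt_eqF.
    rewrite [X in X < _]hBe ltr_pM2l //; lra.
  by rewrite mulrC.
Qed.
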